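(* Let $s\in\{1/2,1,3/2,\dots\}$, $N=2s$, and let $C,D,E$ be linear operators on $\mathcal{H}_s$ with $C=DE$. Let $p_C,p_D,p_E$ be their Majorana polynomials. Then \[ p_C(z)=(N!)^{-1}\,p_D(z_a,\partial_a)\,p_E(z_a,z^a),\qquad p_C(z)=(N!)^{-1}\,p_E(\partial^a,z^a)\,p_D(z_a,z^a). \] Here $p_D(z_a,\partial_a)$ denotes the differential operator obtained from $p_D(z_1,z_2,z^1,z^2)$ by replacing each $z^a$ by $\partial_a=\partial/\partial z_a$, and $p_E(\partial^a,z^a)$ the one obtained from $p_E$ by replacing each $z_a$ by $\partial^a=\partial/\partial z^a$; in each monomial the derivatives are placed to the right of the multiplication factors, so that they act only on the polynomial to the right.
   Context: $\mathcal{H}_s$ is the spin-$s$ Hilbert space with orthonormal $S_z$-eigenbasis $\{|s,m\rangle\}_{m=-s}^{s}$. Treat $z_1,z_2,z^1,z^2$ as four independent complex variables (formally $z^a=\overline{z_a}$), with $\partial_a z_b=\partial^a z^b=\delta_{ab}$, $\partial_a z^b=\partial^a z_b=0$. Define the bra $\langle -\mathbf n_B|=\sum_{m=-s}^{s}(-1)^{s-m}\sqrt{\binom{2s}{s-m}}\,z_1^{s+m}z_2^{s-m}\langle s,m|$ and the ket $|-\mathbf n_B\rangle=\sum_{m=-s}^{s}(-1)^{s-m}\sqrt{\binom{2s}{s-m}}\,(z^1)^{s+m}(z^2)^{s-m}|s,m\rangle$. The Majorana polynomial of an operator $C$ on $\mathcal{H}_s$ is $p_C(z)=\langle -\mathbf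 n_B|C|-\mathbf n_B\rangle$, a polynomial in $(z_1,z_2,z^1,z^2)$ each of whose monomials $z_1^\alpha z_2^\beta(z^1)^\gamma(z^2)^\delta$ has $\alpha+\beta=\gamma+\delta=N$. Repeated indices $a\in\{1,2\}$ are summed. *)

(* Defs.v *)
From HB Require Import structures.
From mathcomp Require Import all_boot all_order all_algebra.
From mathcomp Require Import mpoly.
Set Implicit Arguments. Unset Strict Implicit. Unset Printing Implicit Defensive.
Import Order.TTheory GRing.Theory Num.Theory.
Local Open Scope ring_scope.

(* Spin s = N/2; H_s has basis |s,m>, m = -s..s, indexed here by
   k : 'I_(N.+1) with k = s + m (so s - m = N - k).  Operators on H_s are
   (N+1)x(N+1) matrices A with A j k = <j|A|k>.
   Variables of {mpoly R[4]}: 'X_0 = z_1, 'X_1 = z_2, 'X_2 = z^1, 'X_3 = z^2. *)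

Section Majorana.
Variable R : numClosedFieldType.
Variable N : nat.

Definition vz1 : 'I_4 := inord 0.
Definition vz2 : 'I_4 := inord 1.
Definition vZ1 : 'I_4 := inord 2.
Definition vZ2 : 'I_4 := inord 3.

(* (-1)^(s-m) sqrt(binom(2s, s-m)) with s-m = N-k *)
Definition mcoef (k : 'I_N.+1) : R :=
  (-1) ^+ (N - k) * sqrtC ('C(N, N - k))%:R.

(* <-n_B| coefficient of <k| *)
Definition bra_coef (k : 'I_N.+1) : {mpoly R[4]} :=
  mcoef k *: ('X_vz1 ^+ k * 'X_vz2 ^+ (N - k)).
(* |-n_B> coefficient of |k> *)
Definition ket_coef (k : 'I_N.+1) : {mpoly R[4]} :=
  mcoef k *: ('X_vZ1 ^+ k * 'X_vZ2 ^+ (N - k)).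

(* p_A = <-n_B| A |-n_B> *)
Definition majorana (A : 'M[R]_N.+1) : {mpoly R[4]} :=
  \sum_(j < N.+1) \sum_(k < N.+1) (bra_coef j * (A j k *: ket_coef k)).

Definition dern (i : 'I_4) (n : nat) (f : {mpoly R[4]}) : {mpoly R[4]} :=
  iter n (mderiv i) f.

Definition op_zd (p f : {mpoly R[4]}) : {mpoly R[4]} :=
  \sum_(m <- msupp p)
     p@_m *: ('X_vz1 ^+ (m vz1) * 'X_vz2 ^+ (m vz2)
               * dern vz1 (m vZ1) (dern vz2 (m vZ2) f)).

Definition op_dz (p f : {mpoly R[4]}) : {mpoly R[4]} :=
  \sum_(m <- msupp p)
     p@_m *: ('X_vZ1 ^+ (m vZ1) * 'X_vZ2 ^+ (m vZ2)
               * dern vZ1 (m vz1) (dern vZ2 (m vz2) f)).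

End Majorana.

(* Main.v *)
Require Import Defs.
From HB Require Import structures.
From mathcomp Require Import all_boot all_order all_algebra.
From mathcomp Require Import mpoly.
From mathcomp Require Import ssrcomplements.
From mathcomp Require Import zify ring.
Import Order.TTheory GRing.Theory Num.Theory.
Local Open Scope ring_scope.
Lemma v1 : val vz1 = 0%N. Proof. by rewrite /= inordK. Qed.
Lemma v2 : val vz2 = 1%N. Proof. by rewrite /= inordK. Qed.
Lemma v3 : val vZ1 = 2%N. Proof. by rewrite /= inordK. Qed.
Lemma v4 : val vZ2 = 3%N. Proof. by rewrite /= inordK. Qed.
Ltac veqt := by rewrite -!val_eqE ?v1 ?v2 ?v3 ?v4.
Lemma e12 : (vz1 == vz2) = false. Proof. veqt. Qed.
Lemma e13 : (vz1 == vZ1) = false. Proof. veqt. Qed.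
Lemma e14 : (vz1 == vZ2) = false. Proof. veqt. Qed.
Lemma e21 : (vz2 == vz1) = false. Proof. veqt. Qed.
Lemma e23 : (vz2 == vZ1) = false. Proof. veqt. Qed.
Lemma e24 : (vz2 == vZ2) = false. Proof. veqt. Qed.
Lemma e31 : (vZ1 == vz1) = false. Proof. veqt. Qed.
Lemma e32 : (vZ1 == vz2) = false. Proof. veqt. Qed.
Lemma e34 : (vZ1 == vZ2) = false. Proof. veqt. Qed.
Lemma e41 : (vZ2 == vz1) = false. Proof. veqt. Qed.
Lemma e42 : (vZ2 == vz2) = false. Proof. veqt. Qed.
Lemma e43 : (vZ2 == vZ1) = false. Proof. veqt. Qed.
Definition veqs := (e12, e13, e14, e21, e23, e24, e31, e32, e34, e41, e42, e43, eqxx).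
Lemma all4 (i : 'I_4) : [\/ i = vz1, i = vz2, i = vZ1 | i = vZ2].
Proof.
case: i => [[|[|[|[|i]]]] Hi]; [apply: Or41|apply: Or42|apply: Or43|apply: Or44|by []];
  by apply: val_inj; rewrite /= ?v1 ?v2 ?v3 ?v4.
Qed.


Section S1.
Variable R : numClosedFieldType.
Implicit Types p q f : {mpoly R[4]}.

Definition Lop (T : 'X_{1..4} -> {mpoly R[4]}) p := \sum_(m <- msupp p) p@_m *: T m.

Lemma LopE T p i : (msize p <= i)%N ->
  Lop T p = \sum_(m : 'X_{1..4 < i}) p@_m *: T m.
Proof.
move=> le_pi; set I : subFinType _ := 'X_{1..4 < i}.
rewrite /Lop (big_mksub I) ?msupp_uniq //=; first last.
  by move=> x /msize_mdeg_lt /leq_trans; apply.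
rewrite big_rmcond //= => j /memN_msupp_eq0 ->.
by rewrite scale0r.
Qed.

Lemma LopD T p q : Lop T (p + q) = Lop T p + Lop T q.
Proof.
pose i := (msize p + msize q + msize (p + q))%N.
rewrite (@LopE T p i) ?(@LopE T q i) ?(@LopE T (p+q) i) ?/i; try lia.
rewrite -big_split /=; apply: eq_bigr => m _.
by rewrite mcoeffD scalerDl.
Qed.

Lemma LopZ T c p : Lop T (c *: p) = c *: Lop T p.
Proof.
pose i := (msize p + msize (c *: p))%N.
rewrite (@LopE T p i) ?(@LopE T (c *: p) i) ?/i; try lia.
rewrite scaler_sumr; apply: eq_bigr => m _.
by rewrite mcoeffZ scalerA.
Qed.

Lemma Lop0 T : Lop T 0 = 0.
Proof. by rewrite /Lop msupp0 big_nil. Qed.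

Lemma LopX T m : Lop T 'X_[m] = T m.
Proof. by rewrite /Lop msuppX big_seq1 mcoeffX eqxx scale1r. Qed.

Lemma Lop_sum T (I : Type) (r : seq I) (F : I -> {mpoly R[4]}) :
  Lop T (\sum_(i <- r) F i) = \sum_(i <- r) Lop T (F i).
Proof.
elim: r => [|a r IH]; first by rewrite !big_nil Lop0.
by rewrite !big_cons LopD IH.
Qed.

End S1.


Section S2.
Variable R : numClosedFieldType.
Variable N : nat.

Definition Am (j : nat) : 'X_{1..4} := (U_(vz1) *+ j + U_(vz2) *+ (N - j))%MM.
Definition Bm (j : nat) : 'X_{1..4} := (U_(vZ1) *+ j + U_(vZ2) *+ (N - j))%MM.

Ltac mnms := rewrite /Am /Bm ?mnmBE !mnmDE ?mnmBE ?mnmDE !mulmnE !mnm1E ?veqs /= ?mul1n ?mul0n ?addn0 ?add0n ?subn0.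

Lemma Am1 j : Am j vz1 = j. Proof. by mnms. Qed.
Lemma Am2 j : Am j vz2 = (N - j)%N. Proof. by mnms. Qed.
Lemma Am3 j : Am j vZ1 = 0%N. Proof. by mnms. Qed.
Lemma Am4 j : Am j vZ2 = 0%N. Proof. by mnms. Qed.
Lemma Bm1 j : Bm j vz1 = 0%N. Proof. by mnms. Qed.
Lemma Bm2 j : Bm j vz2 = 0%N. Proof. by mnms. Qed.
Lemma Bm3 j : Bm j vZ1 = j. Proof. by mnms. Qed.
Lemma Bm4 j : Bm j vZ2 = (N - j)%N. Proof. by mnms. Qed.

Lemma AB1 j k : (Am j + Bm k)%MM vz1 = j. Proof. by mnms. Qed.
Lemma AB2 j k : (Am j + Bm k)%MM vz2 = (N - j)%N. Proof. by mnms. Qed.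
Lemma AB3 j k : (Am j + Bm k)%MM vZ1 = k. Proof. by mnms. Qed.
Lemma AB4 j k : (Am j + Bm k)%MM vZ2 = (N - k)%N. Proof. by mnms. Qed.

Lemma XAm j : 'X_vz1 ^+ j * 'X_vz2 ^+ (N - j) = 'X_[Am j] :> {mpoly R[4]}.
Proof. by rewrite !mpolyXn -mpolyXD. Qed.
Lemma XBm j : 'X_vZ1 ^+ j * 'X_vZ2 ^+ (N - j) = 'X_[Bm j] :> {mpoly R[4]}.
Proof. by rewrite !mpolyXn -mpolyXD. Qed.

Lemma majoranaE (M : 'M[R]_N.+1) : majorana M =
  \sum_(j < N.+1) \sum_(k < N.+1) (mcoef R j * M j k * mcoef R k) *: 'X_[(Am j + Bm k)%MM].
Proof.
apply: eq_bigr => j _; apply: eq_bigr => k _.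
rewrite /bra_coef /ket_coef XAm XBm mpolyXD -scalerAl -scalerAr scalerA -scalerAr scalerA.
by [].
Qed.

Lemma dernE i n (f : {mpoly R[4]}) : dern i n f = mderivm (U_(i) *+ n) f.
Proof. by rewrite mderivn_iter. Qed.

Lemma dernD i n (x y : {mpoly R[4]}) : dern i n (x + y) = dern i n x + dern i n y.
Proof. by rewrite !dernE mderivmD. Qed.
Lemma dernZ i n c (x : {mpoly R[4]}) : dern i n (c *: x) = c *: dern i n x.
Proof. by rewrite !dernE mderivmZ. Qed.
Lemma dern_sum i n (I : Type) (r : seq I) (F : I -> {mpoly R[4]}) :
  dern i n (\sum_(a <- r) F a) = \sum_(a <- r) dern i n (F a).
Proof.
elim: r => [|a r IH]; first by rewrite !big_nil dernE (raddf0 (mderivm _)).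
by rewrite !big_cons dernD IH.
Qed.

Lemma ffprod (l k : nat) : (l <= N)%N -> (k <= N)%N ->
  ((N - l) ^_ (N - k) * l ^_ k)%N = if l == k then (k`! * (N - k)`!)%N else 0%N.
Proof.
move=> hl hk; case: ltngtP => h.
- by rewrite (@ffact_small l) ?muln0.
- rewrite (@ffact_small (N - l)) ?mul0n //; lia.
- by rewrite h !ffactnn mulnC.
Qed.

Lemma mnm4 (m1 m2 : 'X_{1..4}) : m1 vz1 = m2 vz1 -> m1 vz2 = m2 vz2 ->
  m1 vZ1 = m2 vZ1 -> m1 vZ2 = m2 vZ2 -> m1 = m2.
Proof. by move=> *; apply/mnmP => i; case: (all4 i) => ->. Qed.

Lemma Dzd (k l m : nat) : (l <= N)%N -> (k <= N)%N ->
  dern vz1 k (dern vz2 (N - k) 'X_[(Am l + Bm m)%MM]) =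
  (if l == k then (k`! * (N - k)`!)%:R else 0 : R) *: 'X_[Bm m].
Proof.
move=> hl hk; rewrite !dernE !mderivnX mderivmZ mderivnX scalerA -natrM.
rewrite !mnmBE !mnmDE !mulmnE !mnm1E ?veqs /= ?mul1n ?mul0n ?addn0 ?add0n ?subn0 ffprod //.
case: eqP => [->|_]; last by rewrite !scale0r.
congr (_ *: _); congr mpolyX; apply: mnm4;
 rewrite !(mnmBE, mnmDE, mulmnE, mnm1E) ?veqs /= ?Am1 ?Am2 ?Am3 ?Am4 ?Bm1 ?Bm2 ?Bm3 ?Bm4; try lia.
Qed.

Lemma Ddz (k l m : nat) : (l <= N)%N -> (k <= N)%N ->
  dern vZ1 k (dern vZ2 (N - k) 'X_[(Am m + Bm l)%MM]) =
  (if l == k then (k`! * (N - k)`!)%:R else 0 : R) *: 'X_[Am m].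
Proof.
move=> hl hk; rewrite !dernE !mderivnX mderivmZ mderivnX scalerA -natrM.
rewrite !mnmBE !mnmDE !mulmnE !mnm1E ?veqs /= ?mul1n ?mul0n ?addn0 ?add0n ?subn0 ffprod //.
case: eqP => [->|_]; last by rewrite !scale0r.
congr (_ *: _); congr mpolyX; apply: mnm4;
 rewrite !(mnmBE, mnmDE, mulmnE, mnm1E) ?veqs /= ?Am1 ?Am2 ?Am3 ?Am4 ?Bm1 ?Bm2 ?Bm3 ?Bm4; try lia.
Qed.

End S2.


Section S3.
Variable R : numClosedFieldType.
Variable N : nat.

Lemma mcoef2 (k : 'I_N.+1) :
  mcoef R k * mcoef R k * (k`! * (N - k)`!)%:R = (N`!)%:R.
Proof.
rewrite /mcoef mulrACA -exprD addnn -signr_odd odd_double expr0 mul1r -expr2 sqrtCK.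
rewrite -natrM bin_sub ?bin_fact //; exact: (ltnSE (ltn_ord k)).
Qed.

Lemma factN0 : (N`!)%:R != 0 :> R.
Proof. by rewrite pnatr_eq0 -lt0n fact_gt0. Qed.

Lemma leN (i : 'I_N.+1) : (i <= N)%N. Proof. exact: (ltnSE (ltn_ord i)). Qed.

Lemma op_zdE (p f : {mpoly R[4]}) : op_zd p f = @Lop R (fun m =>
  'X_vz1 ^+ m vz1 * 'X_vz2 ^+ m vz2 * dern vz1 (m vZ1) (dern vz2 (m vZ2) f)) p.
Proof. by []. Qed.
Lemma op_dzE (p f : {mpoly R[4]}) : op_dz p f = @Lop R (fun m =>
  'X_vZ1 ^+ m vZ1 * 'X_vZ2 ^+ m vZ2 * dern vZ1 (m vz1) (dern vZ2 (m vz2) f)) p.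
Proof. by []. Qed.

Lemma dd_sum a x b y (I : Type) (r : seq I) (F : I -> {mpoly R[4]}) :
  dern a x (dern b y (\sum_(l <- r) F l)) = \sum_(l <- r) dern a x (dern b y (F l)).
Proof. by rewrite !dern_sum. Qed.

Lemma T_zd (j k : 'I_N.+1) (E : 'M[R]_N.+1) :
  'X_vz1 ^+ ((Am N j + Bm N k)%MM vz1) * 'X_vz2 ^+ ((Am N j + Bm N k)%MM vz2)
   * dern vz1 ((Am N j + Bm N k)%MM vZ1) (dern vz2 ((Am N j + Bm N k)%MM vZ2) (majorana E))
  = \sum_(m < N.+1) (mcoef R k * E k m * mcoef R m * (k`! * (N - k)`!)%:R)
        *: 'X_[(Am N j + Bm N m)%MM].
Proof.
rewrite AB1 AB2 AB3 AB4 XAm majoranaE dd_sum mulr_sumr.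
rewrite (bigD1 k) //= [X in _ + X]big1 ?addr0; last first.
  move=> l hl; rewrite dd_sum mulr_sumr big1 // => m _.
  rewrite !dernZ Dzd ?leN // (negbTE hl : (nat_of_ord l == k) = false) scale0r scaler0 mulr0 //.
rewrite dd_sum mulr_sumr; apply: eq_bigr => m _.
rewrite !dernZ Dzd ?leN // eqxx.
by rewrite scalerA -scalerAr -mpolyXD.
Qed.

Lemma T_dz (l m : 'I_N.+1) (D : 'M[R]_N.+1) :
  'X_vZ1 ^+ ((Am N l + Bm N m)%MM vZ1) * 'X_vZ2 ^+ ((Am N l + Bm N m)%MM vZ2)
   * dern vZ1 ((Am N l + Bm N m)%MM vz1) (dern vZ2 ((Am N l + Bm N m)%MM vz2) (majorana D))
  = \sum_(j < N.+1) (mcoef R j * D j l * mcoef R l * (l`! * (N - l)`!)%:R)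
        *: 'X_[(Am N j + Bm N m)%MM].
Proof.
rewrite AB1 AB2 AB3 AB4 XBm majoranaE dd_sum mulr_sumr; apply: eq_bigr => j _.
rewrite dd_sum mulr_sumr (bigD1 l) //= [X in _ + X]big1 ?addr0; last first.
  move=> k hk; rewrite !dernZ Ddz ?leN // (negbTE hk : (nat_of_ord k == l) = false) scale0r scaler0 mulr0 //.
rewrite !dernZ Ddz ?leN // eqxx.
by rewrite scalerA -scalerAr -mpolyXD addmC.
Qed.

End S3.

Theorem lemma1 (R : numClosedFieldType) (N : nat) (hN : (0 < N)%N)
    (C D E : 'M[R]_N.+1) :
  C = D *m E ->
  majorana C = (N`!)%:R^-1 *: op_zd (majorana D) (majorana E) /\
  majorana C = (N`!)%:R^-1 *: op_dz (majorana E) (majorana D).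
Proof.
move=> ->; split.
- rewrite op_zdE [majorana D]majoranaE Lop_sum scaler_sumr majoranaE.
  apply: eq_bigr => j _; rewrite Lop_sum scaler_sumr; symmetry.
  under eq_bigr => k _ do rewrite LopZ LopX T_zd !scaler_sumr.
  under eq_bigr => k _ do under eq_bigr => i _ do rewrite !scalerA.
  rewrite exchange_big /=; apply: eq_bigr => m _.
  rewrite -scaler_suml; congr (_ *: _).
  rewrite mxE mulr_sumr mulr_suml; apply: eq_bigr => k _.
  have h1 := @mcoef2 R N k; have h2 := @factN0 R N.
  transitivity (mcoef R j * (D j k * E k m) * mcoef R m *
     ((N`!)%:R^-1 * (mcoef R k * mcoef R k * (k`! * (N - k)`!)%:R))); first by ring.
  by rewrite h1 mulVf // mulr1.
- rewrite op_dzE [majorana E]majoranaE Lop_sum scaler_sumr majoranaE; symmetry.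
  under eq_bigr => l _ do rewrite Lop_sum scaler_sumr.
  under eq_bigr => l _ do under eq_bigr => m _ do rewrite LopZ LopX T_dz !scaler_sumr.
  under eq_bigr => l _ do under eq_bigr => m _ do under eq_bigr => j _ do rewrite !scalerA.
  under eq_bigr => l _ do rewrite exchange_big /=.
  rewrite exchange_big /=; apply: eq_bigr => j _.
  rewrite exchange_big /=; apply: eq_bigr => m _.
  rewrite -scaler_suml; congr (_ *: _).
  rewrite mxE mulr_sumr mulr_suml; apply: eq_bigr => k _.
  have h1 := @mcoef2 R N k; have h2 := @factN0 R N.
  transitivity (mcoef R j * (D j k * E k m) * mcoef R m *
     ((N`!)%:R^-1 * (mcoef R k * mcoef R k * (k`! * (N - k)`!)%:R))); first by ring.
  by rewrite h1 mulVf // mulr1.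
Qed.
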